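(* For every $A\subseteq\mathbb{N}$, $$\underline{\underline{d}}(A)\le\underline{d}_\infty(A)\le\overline{d}_\infty(A)\le\overline{\overline{d}}(A).$$
   Context: $\mathbb{N}=\{1,2,3,\dots\}$. For $A\subseteq\mathbb{N}$ let $A(n)=|A\cap[1,n]|$; $\mathcal{D}$ is the collection of sets for which $d(A)=\lim_{n\to\infty}A(n)/n$ exists; $\underline{\underline{d}}(A)=\sup\{d(B);\ B\subseteq A,\ B\in\mathcal{D}\}$ and $\overline{\overline{d}}(A)=\inf\{d(C);\ C\supseteq A,\ C\in\mathcal{D}\}$. For $\alpha\ge-1$ put $A_\alpha(n)=\sum_{k=1}^n\chi_A(k)k^\alpha$, $\mathbb{N}_\alpha(n)=\sum_{k=1}^nk^\alpha$, $\underline{d}_\alpha(A)=\liminf_{n\to\infty}\frac{A_\alpha(n)}{\mathbb{N}_\alpha(n)}$, $\overline{d}_\alpha(A)=\limsup_{n\to\infty}\frac{A_\alpha(n)}{\mathbb{N}_\alpha(n)}$, $\underline{d}_\infty(A)=\inf_{\alpha\ge-1}\underline{d}_\alpha(A)$ and $\overline{d}_\infty(A)=\sup_{\alpha\ge-1}\overline{d}_\alpha(A)$ (these equal $\lim_{\alpha\to\infty}\underline{d}_\alpha(A)$ and $\lim_{\alpha\to\infty}\overline{d}_\alpha(A)$ respectively). *)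

(* Defs.v *)
From Stdlib Require Import Reals.
From Coquelicot Require Import Coquelicot.
Open Scope R_scope.

(* A subset of N = {1,2,3,...} is represented by a boolean predicate on nat;
   the value at 0 is irrelevant (it never enters any count). *)

Fixpoint cnt (A : nat -> bool) (n : nat) : R :=
  match n with
  | O => 0
  | S m => cnt A m + (if A (S m) then 1 else 0)
  end.

Definition has_density (A : nat -> bool) : Prop :=
  ex_finite_lim_seq (fun n => cnt A n / INR n).

Definition density (A : nat -> bool) : R :=
  real (Lim_seq (fun n => cnt A n / INR n)).

Definition dd_lower (A : nat -> bool) : Rbar :=
  Lub_Rbar (fun x => exists B : nat -> bool,
     (forall k, (1 <= k)%nat -> B k = true -> A k = true) /\
     has_density B /\ x = density B).

Definition dd_upper (A : nat -> bool) : Rbar :=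
  Glb_Rbar (fun x => exists C : nat -> bool,
     (forall k, (1 <= k)%nat -> A k = true -> C k = true) /\
     has_density C /\ x = density C).

Fixpoint wcnt (A : nat -> bool) (alpha : R) (n : nat) : R :=
  match n with
  | O => 0
  | S m => wcnt A alpha m + (if A (S m) then Rpower (INR (S m)) alpha else 0)
  end.

Definition Ncnt (alpha : R) (n : nat) : R := wcnt (fun _ => true) alpha n.

Definition d_lower_alpha (alpha : R) (A : nat -> bool) : Rbar :=
  LimInf_seq (fun n => wcnt A alpha n / Ncnt alpha n).

Definition d_upper_alpha (alpha : R) (A : nat -> bool) : Rbar :=
  LimSup_seq (fun n => wcnt A alpha n / Ncnt alpha n).

Definition d_lower_infty (A : nat -> bool) : Rbar :=
  Glb_Rbar (fun x => exists alpha, -1 <= alpha /\ d_lower_alpha alpha A = Finite x).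

Definition d_upper_infty (A : nat -> bool) : Rbar :=
  Lub_Rbar (fun x => exists alpha, -1 <= alpha /\ d_upper_alpha alpha A = Finite x).

(* Main.v *)
Require Import Defs.
From Stdlib Require Import Reals Lra Lia.
From Coquelicot Require Import Coquelicot.
Open Scope R_scope.

Lemma exp_le' x y : x <= y -> exp x <= exp y.
Proof. intros [H|H]. left; apply exp_increasing; auto. subst; lra. Qed.

Lemma Rpow_pos a x : 0 < Rpower a x.
Proof. unfold Rpower; apply exp_pos. Qed.

Lemma Rpow_incr a b c : 0 <= c -> 0 < a -> a <= b -> Rpower a c <= Rpower b c.
Proof. intros Hc Ha Hab. unfold Rpower. apply exp_le'. apply Rmult_le_compat_l; auto.
  apply ln_le; auto. Qed.

Lemma Rpow_decr a b c : c <= 0 -> 0 < a -> a <= b -> Rpower b c <= Rpower a c.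
Proof. intros Hc Ha Hab. unfold Rpower. apply exp_le'.
  assert (ln a <= ln b) by (apply ln_le; auto). nra. Qed.

Section Core.
Variable alpha : R.
Hypothesis Halpha : -1 <= alpha.
Let f k := Rpower (INR k) alpha.

Fixpoint Tsum (e : nat -> R) n := match n with O => 0 | S m => Tsum e m + e m * (f (S m) - f m) end.
Fixpoint Tabs n := match n with O => 0 | S m => Tabs m + INR m * Rabs (f (S m) - f m) end.

Lemma Ncnt_S n : Ncnt alpha (S n) = Ncnt alpha n + f (S n).
Proof. reflexivity. Qed.

Lemma Ncnt_0 : Ncnt alpha 0 = 0.
Proof. reflexivity. Qed.

Lemma Ncnt_ge0 n : 0 <= Ncnt alpha n.
Proof. induction n. rewrite Ncnt_0; lra. rewrite Ncnt_S. pose proof (Rpow_pos (INR (S n)) alpha). unfold f; lra. Qed.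

Lemma Ncnt_pos n : (1 <= n)%nat -> 0 < Ncnt alpha n.
Proof. destruct n. lia. intros _. rewrite Ncnt_S. pose proof (Ncnt_ge0 n). pose proof (Rpow_pos (INR (S n)) alpha). unfold f; lra. Qed.

Lemma wcnt_S B n : wcnt B alpha (S n) = wcnt B alpha n + (if B (S n) then f (S n) else 0).
Proof. reflexivity. Qed.

Lemma wcnt_bounds B n : 0 <= wcnt B alpha n <= Ncnt alpha n.
Proof. induction n. rewrite Ncnt_0; simpl; lra. rewrite Ncnt_S, wcnt_S. pose proof (Rpow_pos (INR (S n)) alpha).
  unfold f. destruct (B (S n)); lra. Qed.

Lemma wcnt_mono (B A : nat -> bool) n : (forall k, (1 <= k)%nat -> B k = true -> A k = true) ->
  wcnt B alpha n <= wcnt A alpha n.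
Proof. intros H. induction n. simpl; lra. rewrite !wcnt_S. unfold f. pose proof (Rpow_pos (INR (S n)) alpha).
  destruct (B (S n)) eqn:E. rewrite (H (S n)); [lra|lia|auto]. destruct (A (S n)); lra. Qed.

Lemma abel B d n : wcnt B alpha n - d * Ncnt alpha n =
  (cnt B n - d * INR n) * f n - Tsum (fun k => cnt B k - d * INR k) n.
Proof. induction n. rewrite Ncnt_0; simpl. ring. rewrite Ncnt_S. simpl Tsum.
  assert (Hw : wcnt B alpha n = d * Ncnt alpha n + ((cnt B n - d * INR n) * f n -
     Tsum (fun k => cnt B k - d * INR k) n)) by lra.
  rewrite wcnt_S. change (cnt B (S n)) with (cnt B n + (if B (S n) then 1 else 0)).
  rewrite Hw. unfold f. rewrite S_INR. destruct (B (S n)); ring. Qed.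

Lemma abelN n : Ncnt alpha n = INR n * f n - Tsum INR n.
Proof. induction n. rewrite Ncnt_0; simpl. ring. rewrite Ncnt_S. simpl Tsum. rewrite IHn, S_INR. ring. Qed.

Lemma Tabs_ge0 n : 0 <= Tabs n.
Proof. induction n; simpl. lra. pose proof (pos_INR n). pose proof (Rabs_pos (f (S n) - f n)). nra. Qed.

Lemma f_mono : (forall k, (1 <= k)%nat -> f k <= f (S k)) \/ (forall k, (1 <= k)%nat -> f (S k) <= f k).
Proof. destruct (Rle_or_lt 0 alpha) as [H|H].
  - left. intros k Hk. apply Rpow_incr; auto. apply lt_0_INR; lia. apply le_INR; lia.
  - right. intros k Hk. apply Rpow_decr; [lra| |]. apply lt_0_INR; lia. apply le_INR; lia.
Qed.

Lemma f_pos k : 0 < f k.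
Proof. apply Rpow_pos. Qed.

Lemma Tabs_eq n : Tabs n = Rabs (Tsum INR n).
Proof. destruct f_mono as [Hm|Hm].
  - assert (Tsum INR n = Tabs n).
    { induction n. reflexivity. simpl. rewrite IHn. destruct n.
      simpl. ring. rewrite (Rabs_pos_eq (f (S (S n)) - f (S n))). ring.
      pose proof (Hm (S n) ltac:(lia)). lra. }
    rewrite H, Rabs_pos_eq; auto. apply Tabs_ge0.
  - assert (Tsum INR n = - Tabs n).
    { induction n. simpl; ring. simpl. rewrite IHn. destruct n.
      simpl. ring. rewrite (Rabs_left1 (f (S (S n)) - f (S n))). ring.
      pose proof (Hm (S n) ltac:(lia)). lra. }
    rewrite H, Rabs_Ropp, Rabs_pos_eq; auto. apply Tabs_ge0.
Qed.

Lemma Tabs_le n : Tabs n <= INR n * f n + Ncnt alpha n.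
Proof. rewrite Tabs_eq. pose proof (abelN n).
  assert (Tsum INR n = INR n * f n - Ncnt alpha n) by lra. rewrite H0.
  pose proof (Ncnt_ge0 n). pose proof (pos_INR n). pose proof (f_pos n).
  assert (0 <= INR n * f n) by nra.
  apply Rabs_le; lra. Qed.

Lemma Tsum_bound e eps K : 0 <= eps -> (forall k, (K <= k)%nat -> Rabs (e k) <= eps * INR k) ->
  forall p, Rabs (Tsum e (K+p) - Tsum e K) <= eps * (Tabs (K+p) - Tabs K).
Proof. intros He H p. induction p.
  - rewrite Nat.add_0_r. unfold Rminus. rewrite Rplus_opp_r, Rabs_R0. lra.
  - rewrite Nat.add_succ_r. simpl.
    replace (Tsum e (K + p)%nat + e (K + p)%nat * (f (S (K + p)) - f (K + p)) - Tsum e K)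
      with ((Tsum e (K + p)%nat - Tsum e K) + e (K + p)%nat * (f (S (K + p)) - f (K + p))) by ring.
    eapply Rle_trans. apply Rabs_triang. rewrite Rabs_mult.
    pose proof (H (K+p)%nat ltac:(lia)).
    pose proof (Rabs_pos (f (S (K + p)) - f (K + p))).
    assert (Rabs (e (K + p)%nat) * Rabs (f (S (K + p)) - f (K + p)) <=
            eps * INR (K+p) * Rabs (f (S (K + p)) - f (K + p))) by (apply Rmult_le_compat_r; auto).
    nra.
Qed.

Lemma Ncnt_lower_dec : alpha < 0 -> forall n m, (n <= m)%nat -> INR n * f m <= Ncnt alpha n.
Proof. intros Ha n. induction n; intros m Hm.
  - rewrite Ncnt_0. simpl. lra.
  - rewrite Ncnt_S, S_INR. pose proof (IHn m ltac:(lia)).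
    assert (f m <= f (S n)). { apply Rpow_decr; [lra| |]. apply lt_0_INR; lia. apply le_INR; lia. }
    lra.
Qed.

Lemma Ncnt_lower_inc : 0 <= alpha -> forall j p, Ncnt alpha j + INR p * f (S j) <= Ncnt alpha (j + p).
Proof. intros Ha j p. induction p.
  - rewrite Nat.add_0_r. simpl. lra.
  - rewrite Nat.add_succ_r, Ncnt_S, S_INR.
    assert (f (S j) <= f (S (j + p))). { apply Rpow_incr; auto. apply lt_0_INR; lia. apply le_INR; lia. }
    lra.
Qed.

Lemma L_bound : exists L, 0 < L /\ forall n, INR n * f n <= L * Ncnt alpha n.
Proof. destruct (Rle_or_lt 0 alpha) as [Ha|Ha].
  - exists (2 * Rpower 2 alpha). split. pose proof (Rpow_pos 2 alpha). lra.
    intros n. destruct n as [|n0]. rewrite Ncnt_0; simpl; lra. set (n := S n0).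
    assert (exists j p, n = (j + p)%nat /\ (j <= p)%nat /\ (p <= S j)%nat) as (j & p & Hn & H1 & H2).
    { destruct (Nat.Even_or_Odd n) as [[j Hj]|[j Hj]]; exists j; [exists j|exists (S j)]; lia. }
    assert (1 <= j + p)%nat by (unfold n in Hn; lia). rewrite Hn.
    pose proof (Ncnt_lower_inc Ha j p). pose proof (Ncnt_ge0 j).
    assert (f (j + p) <= Rpower 2 alpha * f (S j)).
    { unfold f. rewrite Rpower_mult_distr; [|lra|apply lt_0_INR; lia].
      apply Rpow_incr; auto. apply lt_0_INR; lia.
      rewrite S_INR, plus_INR. apply le_INR in H2. rewrite S_INR in H2. lra. }
    assert (INR (j + p) <= 2 * INR p) by (rewrite plus_INR; apply le_INR in H1; lra).
    pose proof (f_pos (j+p)). pose proof (f_pos (S j)). pose proof (Rpow_pos 2 alpha).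
    pose proof (pos_INR p). pose proof (pos_INR (j+p)).
    assert (INR (j + p) * f (j + p) <= (2 * INR p) * (Rpower 2 alpha * f (S j))).
    { apply Rmult_le_compat; lra. }
    assert (0 <= INR p * f (S j)) by nra.
    nra.
  - exists 1. split. lra. intros n. pose proof (Ncnt_lower_dec Ha n n (le_n n)). lra.
Qed.

Lemma ln_le_self y : 0 < y -> ln (1 + y) <= y.
Proof. intros Hy. rewrite <- (ln_exp y) at 2. apply ln_le. lra. apply exp_ineq1_le. Qed.

Lemma ln_bound n : ln (INR n + 1) <= Ncnt alpha n.
Proof. induction n.
  - simpl. rewrite Rplus_0_l, ln_1, Ncnt_0. lra.
  - rewrite Ncnt_S, S_INR.
    pose proof (pos_INR n).
    assert (ln (INR n + 1 + 1) = ln (INR n + 1) + ln (1 + / (INR n + 1))).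
    { rewrite <- ln_mult; [|lra|]. f_equal. field. lra.
      pose proof (Rinv_0_lt_compat (INR n + 1) ltac:(lra)). lra. }
    pose proof (ln_le_self (/ (INR n + 1)) (Rinv_0_lt_compat (INR n + 1) ltac:(lra))).
    assert (/ (INR n + 1) <= f (S n)).
    { unfold f. rewrite S_INR. replace (/ (INR n + 1)) with (Rpower (INR n + 1) (- (1))).
      apply Rle_Rpower; lra. rewrite Rpower_Ropp, Rpower_1; lra. }
    lra.
Qed.

Lemma Ncnt_unbounded M : exists N0, forall n, (N0 <= n)%nat -> M <= Ncnt alpha n.
Proof. destruct (INR_unbounded (exp M)) as [N0 HN]. exists N0. intros n Hn.
  apply le_INR in Hn. eapply Rle_trans; [|apply ln_bound].
  rewrite <- (ln_exp M) at 1. left. apply ln_increasing. apply exp_pos. lra. Qed.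
End Core.
Lemma core B alpha (d : R) : -1 <= alpha -> is_lim_seq (fun n => cnt B n / INR n) d ->
  is_lim_seq (fun n => wcnt B alpha n / Ncnt alpha n) d.
Proof.
  intros Ha Hl. apply (proj2 (is_lim_seq_spec _ _)) in Hl. apply (proj1 (is_lim_seq_spec _ _)). intros eps.
  destruct (L_bound alpha) as [L [HL HLb]].
  pose proof (cond_pos eps) as Heps.
  set (ep := eps / (2 * L + 3)).
  assert (Hep : 0 < ep) by (unfold ep; apply Rdiv_lt_0_compat; lra).
  assert (Hepe : ep * (2 * L + 3) = eps) by (unfold ep; field; lra).
  destruct (Hl (mkposreal ep Hep)) as [K1 HK1]. simpl in HK1.
  set (K := Nat.max K1 1).
  set (e := fun k => cnt B k - d * INR k).
  assert (He : forall k, (K <= k)%nat -> Rabs (e k) <= ep * INR k).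
  { intros k Hk. pose proof (HK1 k ltac:(lia)).
    assert (0 < INR k) by (apply lt_0_INR; lia).
    assert (e k = (cnt B k / INR k - d) * INR k) by (unfold e; field; lra).
    rewrite H1, Rabs_mult, (Rabs_pos_eq (INR k)); nra. }
  set (M := Rabs (Tsum alpha e K)).
  destruct (Ncnt_unbounded alpha Ha (M / ep)) as [N2 HN2].
  exists (Nat.max K N2). intros n Hn.
  assert (HN : 0 < Ncnt alpha n) by (apply Ncnt_pos; lia).
  replace (wcnt B alpha n / Ncnt alpha n - d) with ((wcnt B alpha n - d * Ncnt alpha n) / Ncnt alpha n)
    by (field; lra).
  rewrite abel. fold e.
  pose proof (Tsum_bound alpha e ep K ltac:(lra) He (n - K)) as HT.
  replace (K + (n - K))%nat with n in HT by lia.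
  pose proof (Tabs_le alpha n). pose proof (Tabs_ge0 alpha K). pose proof (HLb n).
  pose proof (HN2 n ltac:(lia)) as HM.
  assert (HM' : M <= ep * Ncnt alpha n).
  { apply Rmult_le_compat_l with (r := ep) in HM; [|lra].
    replace (ep * (M / ep)) with M in HM by (field; lra). lra. }
  pose proof (He n ltac:(lia)) as Hen.
  pose proof (Rpow_pos (INR n) alpha) as Hf.
  pose proof (pos_INR n).
  set (fn := Rpower (INR n) alpha) in *.
  set (T := Tsum alpha e n) in *. set (TK := Tsum alpha e K) in *.
  assert (HT2 : Rabs T <= M + ep * (Tabs alpha n - Tabs alpha K)).
  { unfold M. replace T with (TK + (T - TK)) by ring.
    eapply Rle_trans. apply Rabs_triang. lra. }
  assert (G1 : Rabs (e n * fn - T) <= Rabs (e n) * fn + Rabs T).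
  { eapply Rle_trans. apply Rabs_triang. rewrite Rabs_Ropp, Rabs_mult, (Rabs_pos_eq fn); lra. }
  assert (G2 : Rabs (e n) * fn <= ep * INR n * fn) by (apply Rmult_le_compat_r; lra).
  assert (G3 : Rabs (e n * fn - T) <= M + ep * (2 * (INR n * fn) + Ncnt alpha n)) by nra.
  assert (G4 : ep * (INR n * fn) <= ep * (L * Ncnt alpha n)) by (apply Rmult_le_compat_l; lra).
  rewrite Rabs_div by lra. rewrite (Rabs_pos_eq (Ncnt alpha n)) by lra.
  apply Rlt_div_l. lra.
  assert (0 < ep * Ncnt alpha n) by nra.
  change (cnt B n - d * INR n) with (e n). rewrite <- Hepe. nra.
Qed.

Lemma density_lim B : has_density B -> is_lim_seq (fun n => cnt B n / INR n) (density B).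
Proof. intros [l Hl]. unfold density. rewrite (is_lim_seq_unique _ _ Hl). simpl. exact Hl. Qed.

Lemma ratio_bounds A alpha n : 0 <= wcnt A alpha n / Ncnt alpha n <= 1.
Proof. destruct n as [|n].
  - simpl. rewrite Ncnt_0. unfold Rdiv. rewrite Rmult_0_l. lra.
  - pose proof (Ncnt_pos alpha (S n) ltac:(lia)). pose proof (wcnt_bounds alpha A (S n)).
    split. apply Rdiv_le_0_compat; lra.
    apply (Rmult_le_reg_r (Ncnt alpha (S n))); [lra|]. unfold Rdiv. rewrite Rmult_assoc, Rinv_l by lra. lra.
Qed.

Lemma liminf_fin u : (forall n, 0 <= u n <= 1) -> exists x, LimInf_seq u = Finite x.
Proof. intros H.
  assert (H1 : Rbar_le (LimInf_seq (fun _ => 0)) (LimInf_seq u)) by (apply LimInf_le; exists 0%nat; intros n _; apply H).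
  assert (H2 : Rbar_le (LimInf_seq u) (LimInf_seq (fun _ => 1))) by (apply LimInf_le; exists 0%nat; intros n _; apply H).
  rewrite LimInf_seq_const in H1, H2.
  destruct (LimInf_seq u); simpl in *; try contradiction; eauto. Qed.

Lemma limsup_fin u : (forall n, 0 <= u n <= 1) -> exists x, LimSup_seq u = Finite x.
Proof. intros H.
  assert (H1 : Rbar_le (LimSup_seq (fun _ => 0)) (LimSup_seq u)) by (apply LimSup_le; exists 0%nat; intros n _; apply H).
  assert (H2 : Rbar_le (LimSup_seq u) (LimSup_seq (fun _ => 1))) by (apply LimSup_le; exists 0%nat; intros n _; apply H).
  rewrite LimSup_seq_const in H1, H2.
  destruct (LimSup_seq u); simpl in *; try contradiction; eauto. Qed.

Theorem corollary4p5 (A : nat -> bool) :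
  Rbar_le (dd_lower A) (d_lower_infty A) /\
  Rbar_le (d_lower_infty A) (d_upper_infty A) /\
  Rbar_le (d_upper_infty A) (dd_upper A).
Proof.
  split; [|split].
  - unfold dd_lower, d_lower_infty.
    apply (proj2 (Lub_Rbar_correct _)). intros x [B [Hsub [Hd ->]]].
    apply (proj2 (Glb_Rbar_correct _)). intros y [alpha [Ha Hy]].
    change (Rbar_le (Finite (density B)) (Finite y)). rewrite <- Hy. unfold d_lower_alpha.
    rewrite <- (is_LimInf_seq_unique _ _ (is_lim_LimInf_seq _ _ (core B alpha (density B) Ha (density_lim B Hd)))).
    apply LimInf_le. exists 1%nat. intros n Hn. unfold Rdiv. apply Rmult_le_compat_r.
    left; apply Rinv_0_lt_compat, Ncnt_pos; lia. apply wcnt_mono; auto.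
  - unfold d_lower_infty, d_upper_infty.
    destruct (liminf_fin _ (ratio_bounds A 0)) as [a Ha].
    destruct (limsup_fin _ (ratio_bounds A 0)) as [b Hb].
    apply Rbar_le_trans with (Finite a).
    + apply (proj1 (Glb_Rbar_correct _)). exists 0. split. lra. exact Ha.
    + apply Rbar_le_trans with (Finite b).
      * rewrite <- Ha, <- Hb. apply LimSup_LimInf_seq_le.
      * apply (proj1 (Lub_Rbar_correct _)). exists 0. split. lra. exact Hb.
  - unfold dd_upper, d_upper_infty.
    apply (proj2 (Lub_Rbar_correct _)). intros y [alpha [Ha Hy]].
    apply (proj2 (Glb_Rbar_correct _)). intros x [C [Hsub [Hd ->]]].
    change (Rbar_le (Finite y) (Finite (density C))). rewrite <- Hy. unfold d_upper_alpha.
    rewrite <- (is_LimSup_seq_unique _ _ (is_lim_LimSup_seq _ _ (core C alpha (density C) Ha (density_lim C Hd)))).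
    apply LimSup_le. exists 1%nat. intros n Hn. unfold Rdiv. apply Rmult_le_compat_r.
    left; apply Rinv_0_lt_compat, Ncnt_pos; lia. apply wcnt_mono; auto.
Qed.
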